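(* Let $k\ge2\sqrt2$ be real. For $x=e^{i\theta}$ on the unit circle (with $\cos\theta\ne0$) set $$y_{1}(x)=\frac{k+\sqrt{k^2-16\cos^2\theta\,(3-4\cos^2\theta)}}{4\cos\theta}.$$ Then $|y_1(x)|\ge1$ for all such $x$.
   Context: $y_1(x)$ is the root of larger absolute value in $y$ of $(x+x^{-1})y^2-ky-(x^3+x^{-3})=0$ (which equals $-y^3R_k(x/y,1/(xy))$ for $R_k(x,y)=y^3-y+x^3-x+kxy$). Here $\sqrt{\cdot}$ is the principal square root. *)

(* Defs.v *)
From HB Require Import structures.
From mathcomp Require Import all_boot all_order all_algebra.
From mathcomp Require Import complex.
From mathcomp Require Import reals trigo.
Set Implicit Arguments. Unset Strict Implicit. Unset Printing Implicit Defensive.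
Import Order.TTheory GRing.Theory Num.Theory.
Local Open Scope ring_scope.
Local Open Scope complex_scope.

Definition y1 (R : realType) (k theta : R) : R[i] :=
  let c := cos theta in
  ((k%:C + sqrtc ((k ^+ 2 - 16 * c ^+ 2 * (3 - 4 * c ^+ 2))%:C))
     / (4 * c)%:C).

(* Main.v *)
Require Import Defs.
From HB Require Import structures.
From mathcomp Require Import all_boot all_order all_algebra.
From mathcomp Require Import complex.
From mathcomp Require Import reals trigo.
From mathcomp Require Import lra.
Import Order.TTheory GRing.Theory Num.Theory.
Local Open Scope ring_scope.
Local Open Scope complex_scope.

Lemma key (R : realType) (a b w : R) : w != 0 ->
  w ^+ 2 <= a ^+ 2 + b ^+ 2 -> 1 <= `|(a +i* b) / w%:C|.
Proof.
move=> w0 h.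
rewrite normrM normfV !normc_def /=.
rewrite expr0n /= addr0 sqrtr_sqr.
rewrite -rmorphV ?unitfE ?normr_eq0 // -rmorphM /= -(rmorph1 (real_complex R)) lecR.
rewrite ler_pdivlMr ?normr_gt0 // mul1r -(sqrtr_sqr w) ler_sqrt //.
by rewrite addr_ge0 ?sqr_ge0.
Qed.

Lemma realpos (R : realFieldType) (k t a : R) : 8 <= k^+2 -> 0 <= k -> 0 < a -> a <= 1 ->
  0 <= t -> t^+2 = k^+2 - 16 * a^+2 * (3 - 4 * a^+2) -> (4*a)^+2 <= (k+t)^+2.
Proof.
move=> hk k0 a0 a1 t0 ht.
rewrite leNgt; apply/negP => hlt.
have h1 : k + t < 4 * a by nra.
have h2 : t^+2 < (4*a - k)^+2 by nra.
have h3 : k < 8 * a * (1 - a^+2) by nra.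
have h4 : 1/2 < a^+2 by nra.
have h5 : k^+2 < 64 * a^+2 * (1 - a^+2)^+2.
  have : 0 <= 1 - a^+2 by nra.
  nra.
nra.
Qed.

Lemma realneg {R : realFieldType} (k u : R) : 8 <= k^+2 -> 0 < u ->
  k^+2 - 16 * u * (3 - 4 * u) < 0 -> 16 * u <= k^+2 - (k^+2 - 16 * u * (3 - 4 * u)).
Proof. move=> hk u0 hD. nra. Qed.

Theorem lemma2 (R : realType) (k theta : R) :
  2 * Num.sqrt 2 <= k -> cos theta != 0 -> 1 <= `|y1 k theta|.
Proof.
move=> hk c0.
rewrite /y1.
set c := cos theta.
set D := k ^+ 2 - _.
have k0 : 0 <= k by apply: le_trans hk; rewrite mulr_ge0 ?sqrtr_ge0.
have k8 : 8 <= k ^+ 2.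
  have -> : (8 : R) = (2 * Num.sqrt 2) ^+ 2.
    by rewrite exprMn sqr_sqrtr //; lra.
  by rewrite ler_pXn2r // ?nnegrE ?mulr_ge0 ?sqrtr_ge0.
have cn : `|c| <= 1 by apply: cos_max.
have cp : 0 < `|c| by rewrite normr_gt0.
have cc : c ^+ 2 = `|c| ^+ 2 by rewrite real_normK // num_real.
have hs := sqr_sqrtc D%:C.
case E: (sqrtc D%:C) hs => [a b] hs.
have -> : k%:C + (a +i* b) = (k + a) +i* b by apply/eqP; rewrite eq_complex /= add0r !eqxx.
apply: key; first by rewrite mulf_neq0 // pnatr_eq0.
move: hs; rewrite expr2 /= => /eqP; rewrite eq_complex /= => /andP [/eqP h1 /eqP h2].
have hab : a * b = 0 by lra.
have hD : D = a ^+ 2 - b ^+ 2 by rewrite -h1 !expr2; lra.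
case: (lerP 0 D) => hD0.
- move: E; rewrite sqrtc_sqrtr ?lecR //= => -[ha hb].
  subst a b.
  rewrite expr0n /= addr0 exprMn cc -exprMn.
  apply: realpos => //; first exact: sqrtr_ge0.
  by rewrite sqr_sqrtr // /D cc.
- have a0 : a = 0.
    move/eqP: hab; rewrite mulf_eq0 => /orP [/eqP //|/eqP b0].
    by move: hD0; rewrite hD b0 expr0n /= subr0 ltNge sqr_ge0.
  subst a.
  rewrite addr0 exprMn.
  have hb : b ^+ 2 = - D by rewrite hD expr0n /= sub0r opprK.
  have u0 : 0 < c ^+ 2 by rewrite cc exprn_gt0.
  have r := @realneg _ k (c ^+ 2) k8 u0 hD0.
  rewrite hb (_ : (4:R) ^+ 2 = 16); last by rewrite expr2 -natrM.
  exact: r.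
Qed.
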